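(* Let $f:\{0,1\}^n\to\{0,1\}$, $J\subseteq[n]$, and let $f_J$ be a $J$-symmetric function closest to $f$. Then $$\mathrm{dist}(f,f_J)\le\mathrm{SymInf}_f(J)\le 2\cdot\mathrm{dist}(f,f_J).$$
   Context: $\mathcal{S}_J$ is the set of permutations of $[n]$ fixing every element outside $J$; for a permutation $\pi$, $\pi x$ is the vector whose $\pi(i)$-th coordinate is $x_i$. $f$ is $J$-symmetric if $f(\pi x)=f(x)$ for all $x$ and $\pi\in\mathcal{S}_J$. $\mathrm{dist}(f,g)=\Pr_x[f(x)\ne g(x)]$ for uniform $x\in\{0,1\}^n$. $\mathrm{SymInf}_f(J)=\Pr_{x,\pi}[f(x)\ne f(\pi x)]$ with $x$ uniform in $\{0,1\}^n$ and $\pi$ uniform in $\mathcal{S}_J$. *)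

(* Defs.v *)
From mathcomp Require Import all_boot all_order all_algebra all_fingroup.
Set Implicit Arguments. Unset Strict Implicit. Unset Printing Implicit Defensive.
Import GRing.Theory Num.Theory.
Local Open Scope ring_scope.

(* Points of {0,1}^n, coordinates indexed by 'I_n (i.e. [n] shifted to 0..n-1). *)
Notation cube n := {ffun 'I_n -> bool}.

(* pi x : the vector whose pi(i)-th coordinate is x_i, i.e. (pi x)_j = x_(pi^-1 j). *)
Definition pact (n : nat) (p : {perm 'I_n}) (x : cube n) : cube n :=
  [ffun j => x (p^-1%g j)].

Definition SymJ (n : nat) (J : {set 'I_n}) : {set {perm 'I_n}} :=
  [set p | perm_on J p].

Definition J_symmetric (n : nat) (J : {set 'I_n}) (f : cube n -> bool) : Prop :=
  forall (x : cube n) (p : {perm 'I_n}), p \in SymJ J -> f (pact p x) = f x.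

Definition dist (n : nat) (f g : cube n -> bool) : rat :=
  #|[set x : cube n | f x != g x]|%:R / #|[set: cube n]|%:R.

Definition SymInf (n : nat) (f : cube n -> bool) (J : {set 'I_n}) : rat :=
  #|[set xp : cube n * {perm 'I_n} |
      (xp.2 \in SymJ J) && (f xp.1 != f (pact xp.2 xp.1))]|%:R
  / (#|[set: cube n]| * #|SymJ J|)%:R.

(* Main.v *)
Require Import Defs.
From mathcomp Require Import all_boot all_order all_algebra all_fingroup.
From mathcomp Require Import zify.
Import Order.TTheory GRing.Theory Num.Theory.
Local Open Scope ring_scope.

Lemma card_sumP (T : finType) (P : pred T) :
  #|[set x | P x]| = (\sum_x (P x : nat))%N.
Proof.
rewrite -sum1_card big_mkcond /=; apply: eq_bigr => x _.
by rewrite inE; case: (P x).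
Qed.

Lemma pactM n (p q : {perm 'I_n}) x : pact q (pact p x) = pact (p * q)%g x.
Proof. by apply/ffunP => j; rewrite !ffunE invMg permM. Qed.

Lemma pact_inj n (p : {perm 'I_n}) : injective (pact p).
Proof.
move=> x y h; apply/ffunP => j.
have := congr1 (fun z : cube n => z (p j)) h; by rewrite !ffunE permK.
Qed.

Lemma SymJM n (J : {set 'I_n}) p q : p \in SymJ J -> (p * q)%g \in SymJ J = (q \in SymJ J).
Proof.
rewrite !inE => hp; apply/idP/idP => hq; last exact: perm_onM.
have -> : q = (p^-1 * (p * q))%g by rewrite mulgA mulVg mul1g.
by apply: perm_onM => //; apply: perm_onV.
Qed.

Lemma sum_pact n (p : {perm 'I_n}) (F : cube n -> nat) :
  (\sum_x F (pact p x) = \sum_x F x)%N.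
Proof. by rewrite [RHS](reindex_inj (@pact_inj n p)). Qed.

Lemma SymInf_num n (f : cube n -> bool) (J : {set 'I_n}) :
  #|[set xp : cube n * {perm 'I_n} |
      (xp.2 \in SymJ J) && (f xp.1 != f (pact xp.2 xp.1))]| =
  (\sum_x \sum_p ((p \in SymJ J) && (f x != f (pact p x)) : nat))%N.
Proof. by rewrite card_sumP (pair_big xpredT xpredT (fun x p => ((p \in SymJ J) && (f x != f (pact p x)) : nat))). Qed.

Lemma dist_num n (f g : cube n -> bool) (J : {set 'I_n}) :
  (#|SymJ J| * #|[set x | f x != g x]| =
   \sum_p \sum_x ((p \in SymJ J) && (f x != g x) : nat))%N.
Proof.
transitivity (\sum_p ((p \in SymJ J) : nat) * #|[set x | f x != g x]|)%N.
  rewrite -big_distrl /=; congr (_ * _)%N.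
  by rewrite -sum1_card big_mkcond.
apply: eq_bigr => p _; rewrite card_sumP.
by case: (p \in SymJ J); rewrite ?mul1n ?mul0n // big1.
Qed.


Lemma cardSJ n (J : {set 'I_n}) :
  #|SymJ J| = (\sum_p ((p \in SymJ J) : nat))%N.
Proof. by rewrite -sum1_card big_mkcond. Qed.

Lemma divnat_le (a b d : nat) : (0 < d)%N ->
  ((a%:R / d%:R : rat) <= b%:R / d%:R) = (a <= b)%N.
Proof. by move=> hd; rewrite ler_pM2r ?invr_gt0 ?ltr0n // ler_nat. Qed.

Lemma dist_eq n (f g : cube n -> bool) (J : {set 'I_n}) :
  dist f g = (#|SymJ J| * #|[set x | f x != g x]|)%:R /
             (#|[set: cube n]| * #|SymJ J|)%:R.
Proof.
have hM : (0 < #|SymJ J|)%N by apply/card_gt0P; exists 1%g; rewrite inE perm_on1.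
rewrite /dist !natrM [X in _ = _ / X]mulrC -mulf_div divff ?mul1r // pnatr_eq0 -lt0n; exact: hM.
Qed.

Lemma upper_nat n (f fJ : cube n -> bool) (J : {set 'I_n})
  (hsym : J_symmetric J fJ) :
  (\sum_x \sum_p ((p \in SymJ J) && (f x != f (pact p x)) : nat) <=
   2 * (#|SymJ J| * #|[set x | f x != fJ x]|))%N.
Proof.
apply: (@leq_trans (\sum_x \sum_p
   (((p \in SymJ J) && (f x != fJ x) : nat) +
    ((p \in SymJ J) && (f (pact p x) != fJ (pact p x)) : nat)))%N).
  apply: leq_sum => x _; apply: leq_sum => p _.
  case hp: (p \in SymJ J) => //=.
  rewrite (hsym x p hp).
  by case: (f x); case: (f (pact p x)); case: (fJ x).
rewrite mul2n -addnn (dist_num n f fJ J).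
rewrite exchange_big /= -big_split /=.
apply: leq_sum => p _; rewrite big_split /= leq_add2l.
by rewrite (sum_pact n p (fun y => ((p \in SymJ J) && (f y != fJ y) : nat))).
Qed.

Lemma lower_nat n (f : cube n -> bool) (J : {set 'I_n}) :
  let g := fun x : cube n =>
    (#|SymJ J| < 2 * \sum_q ((q \in SymJ J) && f (pact q x) : nat))%N in
  J_symmetric J g /\
  (#|SymJ J| * #|[set x | f x != g x]| <=
   \sum_x \sum_p ((p \in SymJ J) && (f x != f (pact p x)) : nat))%N.
Proof.
move=> g.
have gsym : J_symmetric J g.
  move=> x p hp; rewrite /g; congr (_ < 2 * _)%N.
  rewrite [RHS](reindex_inj (mulgI p)) /=.
  by apply: eq_bigr => q _; rewrite pactM SymJM.
split => //.
rewrite dist_num.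
apply: (@leq_trans (\sum_p \sum_x ((p \in SymJ J) && (f (pact p x) != g x) : nat))%N).
  apply/eq_leq/eq_bigr => p _.
  rewrite -(sum_pact n p (fun y => ((p \in SymJ J) && (f y != g y) : nat))).
  apply: eq_bigr => x _; case hp: (p \in SymJ J) => //=.
  by rewrite (gsym x p hp).
rewrite exchange_big /=; apply: leq_sum => x _.
set ones := (\sum_q ((q \in SymJ J) && f (pact q x) : nat))%N.
set zeros := (\sum_q ((q \in SymJ J) && ~~ f (pact q x) : nat))%N.
have hoz : (ones + zeros = #|SymJ J|)%N.
  rewrite cardSJ -big_split /=; apply: eq_bigr => q _.
  by case: (q \in SymJ J); case: (f (pact q x)).
have e1 : forall c : bool,
  (\sum_p ((p \in SymJ J) && (f (pact p x) != c) : nat) =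
   if c then zeros else ones)%N.
  by case; apply: eq_bigr => q _; case: (q \in SymJ J); case: (f (pact q x)).
have e2 : forall c : bool,
  (\sum_p ((p \in SymJ J) && (c != f (pact p x)) : nat) =
   if c then zeros else ones)%N.
  by case; apply: eq_bigr => q _; case: (q \in SymJ J); case: (f (pact q x)).
rewrite e1 e2 /g -/ones.
case: (f x); case: ifP => h //; lia.
Qed.

Theorem lemma3 (n : nat) (f fJ : {ffun 'I_n -> bool} -> bool) (J : {set 'I_n})
  (hsym : J_symmetric J fJ)
  (hclosest : forall g : {ffun 'I_n -> bool} -> bool,
      J_symmetric J g -> dist f fJ <= dist f g) :
  dist f fJ <= SymInf f J /\ SymInf f J <= 2 * dist f fJ.
Proof.
have hN : (0 < #|[set: cube n]|)%N.
  by apply/card_gt0P; exists [ffun _ => true].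
have hM : (0 < #|SymJ J|)%N by apply/card_gt0P; exists 1%g; rewrite inE perm_on1.
have hNM : (0 < #|[set: cube n]| * #|SymJ J|)%N by rewrite muln_gt0 hN hM.
have [gsym hlow] := lower_nat n f J.
set g := (fun x : cube n => _) in gsym hlow.
have hc := hclosest g gsym.
rewrite /SymInf SymInf_num.
split.
  apply: le_trans hc _.
  by rewrite (dist_eq n f g J) divnat_le.
rewrite (dist_eq n f fJ J) mulrA -natrM divnat_le //.
exact: upper_nat.
Qed.
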